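(* Let $G$ be a locally soluble group in which every non-abelian subgroup $H$ satisfies $C_G(H)\le H$. If the hypercenter of $G$ contains two non-commuting elements of finite order, then $G$ is locally finite.
   Context: The hypercenter of $G$ is the final term of the (transfinite) upper central series of $G$. $C_G(H)$ denotes the centralizer of $H$ in $G$. *)

(* Defs.v *)
From Stdlib Require Import List Arith.
Import ListNotations.

Record group := Group {
  carrier :> Type;
  mul : carrier -> carrier -> carrier;
  one : carrier;
  inv : carrier -> carrier;
  mulA : forall x y z, mul x (mul y z) = mul (mul x y) z;
  mul1g : forall x, mul one x = x;
  mulVg : forall x, mul (inv x) x = one
}.

Arguments mul {g} x y.
Arguments one {g}.
Arguments inv {g} x.

Section GroupDefs.
Variable G : group.

Fixpoint gpow (x : G) (n : nat) : G :=
  match n with 0 => one | S m => mul x (gpow x m) end.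

Definition comm (x y : G) : G := mul (mul (inv x) (inv y)) (mul x y).

Definition commute (x y : G) : Prop := mul x y = mul y x.

Definition finite_order (x : G) : Prop := exists n, 0 < n /\ gpow x n = one.

Definition is_subgroup (H : G -> Prop) : Prop :=
  H one /\ (forall x y, H x -> H y -> H (mul x y)) /\ (forall x, H x -> H (inv x)).

Inductive gen (P : G -> Prop) : G -> Prop :=
  | gen_base x : P x -> gen P x
  | gen_one : gen P one
  | gen_mul x y : gen P x -> gen P y -> gen P (mul x y)
  | gen_inv x : gen P x -> gen P (inv x).

Definition fg_subgroup (s : list G) : G -> Prop := gen (fun x => In x s).

Fixpoint derived (H : G -> Prop) (n : nat) : G -> Prop :=
  match n with
  | 0 => H
  | S m => gen (fun z => exists a b, derived H m a /\ derived H m b /\ z = comm a b)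
  end.

Definition soluble (H : G -> Prop) : Prop :=
  exists n, forall x, derived H n x -> x = one.

Definition finite_set (H : G -> Prop) : Prop :=
  exists l : list G, forall x, H x -> In x l.

Definition locally_soluble : Prop := forall s : list G, soluble (fg_subgroup s).

Definition locally_finite : Prop := forall s : list G, finite_set (fg_subgroup s).

Definition abelian (H : G -> Prop) : Prop :=
  forall x y, H x -> H y -> commute x y.

Definition centralizer_le (H : G -> Prop) : Prop :=
  forall g : G, (forall h, H h -> commute g h) -> H g.

(* Hypercenter: the final term of the transfinite upper central series
   Z_0 = 1, Z_{a+1} = {x | forall g, [x,g] in Z_a}, Z_l = U_{a<l} Z_a.
   This is the least fixed point above {1} of the monotone operator
   S |-> {x | forall g, [x,g] in S}, i.e. the inductive predicate below. *)
Inductive hypercenter : G -> Prop :=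
  | hyper_one : hypercenter one
  | hyper_step x : (forall g : G, hypercenter (comm x g)) -> hypercenter x.

End GroupDefs.

(* Main.v *)
Require Import Defs.
From Stdlib Require Import List Arith Lia Classical.
Import ListNotations.

Section Basics.
Variable G : group.
Local Notation "x ** y" := (@mul G x y) (at level 40, left associativity).
Local Notation "1" := (@one G).
Local Notation "x ^-1" := (@inv G x) (at level 3).

Lemma mulgA' (x y z : G) : (x ** y) ** z = x ** (y ** z).
Proof. rewrite (mulA G). reflexivity. Qed.
Lemma mul1 (x : G) : 1 ** x = x. Proof. apply mul1g. Qed.
Lemma mulV (x : G) : x^-1 ** x = 1. Proof. apply mulVg. Qed.
Lemma mulgV (x : G) : x ** x^-1 = 1.
Proof.
  rewrite <- (mul1 (x ** x^-1)).
  rewrite <- (mulV (x^-1)) at 1.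
  rewrite mulgA'. rewrite <- (mulgA' (x^-1) x (x^-1)). rewrite mulV, mul1. apply mulV.
Qed.
Lemma mulg1 (x : G) : x ** 1 = x.
Proof. rewrite <- (mulV x), <- mulgA', mulgV, mul1. reflexivity. Qed.
Lemma mulKg (x y : G) : x^-1 ** (x ** y) = y.
Proof. rewrite <- mulgA', mulV, mul1. reflexivity. Qed.
Lemma mulKVg (x y : G) : x ** (x^-1 ** y) = y.
Proof. rewrite <- mulgA', mulgV, mul1. reflexivity. Qed.
Lemma mul_cancel_l (x y z : G) : x ** y = x ** z -> y = z.
Proof. intro H. rewrite <- (mulKg x y), H, mulKg. reflexivity. Qed.
Lemma inv_unique (x y : G) : x ** y = 1 -> y = x^-1.
Proof. intro H. apply (mul_cancel_l x). rewrite H, mulgV. reflexivity. Qed.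
Lemma invK (x : G) : (x^-1)^-1 = x.
Proof. symmetry. apply inv_unique. apply mulV. Qed.
Lemma invM (x y : G) : (x ** y)^-1 = y^-1 ** x^-1.
Proof. symmetry. apply inv_unique. rewrite !mulgA'. rewrite mulKVg. apply mulgV. Qed.
Lemma inv1 : (1:G)^-1 = 1.
Proof. symmetry. apply inv_unique. apply mul1. Qed.
Lemma mul_cancel_r (x y z : G) : y ** x = z ** x -> y = z.
Proof. intro H. rewrite <- (mulg1 y), <- (mulgV x), <- mulgA', H, mulgA', mulgV, mulg1. reflexivity. Qed.

End Basics.

Global Hint Rewrite mulgA' mul1 mulg1 mulV mulgV mulKg mulKVg invK invM inv1 : gsimp.


Section Main.
Variable G : group.
Local Notation "x ** y" := (@mul G x y) (at level 40, left associativity).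
Local Notation "1" := (@one G).
Local Notation "x ^-1" := (@inv G x) (at level 3).
Local Notation pw := (gpow G).
Local Notation Z := (hypercenter G).
Local Notation cm := (comm G).

Definition cj (a h : G) : G := h^-1 ** (a ** h).

Ltac gs := unfold cj, comm in *; autorewrite with gsimp in *.

Lemma pw_S_r (x : G) n : pw x (S n) = pw x n ** x.
Proof. induction n; simpl in *. gs; reflexivity. rewrite (mulgA' _ x (pw x n) x). rewrite <- IHn. reflexivity. Qed.
Lemma pw_add (x : G) m n : pw x (m + n) = pw x m ** pw x n.
Proof. induction m; simpl. gs; reflexivity. rewrite IHm. gs; reflexivity. Qed.
Lemma pw_mul (x : G) m n : pw x (m * n) = pw (pw x m) n.
Proof. induction n; simpl. rewrite Nat.mul_0_r. reflexivity.
  rewrite Nat.mul_succ_r, Nat.add_comm, pw_add, IHn. reflexivity. Qed.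
Lemma pw_comm (x : G) m n : pw x m ** pw x n = pw x n ** pw x m.
Proof. rewrite <- !pw_add, Nat.add_comm. reflexivity. Qed.
Lemma pw_one n : pw 1 n = 1.
Proof. induction n; simpl; [reflexivity| rewrite IHn; gs; reflexivity]. Qed.
Lemma pw_inv (x : G) n : pw (x^-1) n = (pw x n)^-1.
Proof. induction n; simpl. gs; reflexivity. rewrite IHn. rewrite <- invM.
  f_equal. rewrite <- pw_S_r. reflexivity. Qed.
Lemma cj_pw (x h : G) n : cj (pw x n) h = pw (cj x h) n.
Proof. induction n; simpl. gs; reflexivity. rewrite <- IHn. gs. reflexivity. Qed.
Lemma cj_mul (a b h : G) : cj (a ** b) h = cj a h ** cj b h.
Proof. gs. reflexivity. Qed.
Lemma cj_inv (a h : G) : cj (a^-1) h = (cj a h)^-1.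
Proof. gs. reflexivity. Qed.
Lemma cj_one (h : G) : cj 1 h = 1.
Proof. gs. reflexivity. Qed.
Lemma cj_by_one (a : G) : cj a 1 = a.
Proof. gs. reflexivity. Qed.
Lemma cj_cj (a h k : G) : cj (cj a h) k = cj a (h ** k).
Proof. gs. reflexivity. Qed.
Lemma cj_eq (a h : G) : cj a h = a ** cm a h.
Proof. gs. reflexivity. Qed.
Lemma cj_inj (a b h : G) : cj a h = cj b h -> a = b.
Proof. intro H. assert (cj (cj a h) (h^-1) = cj (cj b h) (h^-1)) by (rewrite H; auto).
  rewrite !cj_cj in H0. gs. exact H0. Qed.
Lemma cm_one_l (g : G) : cm 1 g = 1.
Proof. gs. reflexivity. Qed.
Lemma cj_fix_commute (a h : G) : cj a h = a -> commute G a h.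
Proof. unfold commute. intro H. rewrite <- H at 2. gs. reflexivity. Qed.

Lemma commute_pw (a b : G) n : commute G a b -> commute G (pw a n) b.
Proof. unfold commute. intro H. induction n; simpl. gs; reflexivity.
  rewrite mulgA', IHn, <- mulgA', H, mulgA'. reflexivity. Qed.

Lemma Z_comm (x g : G) : Z x -> Z (cm x g).
Proof. intro H. destruct H. rewrite cm_one_l. constructor. auto. Qed.

Lemma Z_cj (x : G) : Z x -> forall h, Z (cj x h).
Proof.
  intro H. induction H as [|x Hx IH]; intro h.
  - rewrite cj_one. constructor.
  - apply hyper_step. intro g.
    replace (cm (cj x h) g) with (cj (cm x (h ** g ** h^-1)) h) by (gs; reflexivity).
    apply IH.
Qed.

Lemma Z_inv_aux (x : G) : Z x -> forall h, Z (cj (x^-1) h).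
Proof.
  intro H. induction H as [|x Hx IH]; intro h.
  - rewrite inv1, cj_one. constructor.
  - apply hyper_step. intro g.
    replace (cm (cj (x^-1) h) g) with (cj ((cm x (h ** g ** h^-1))^-1) (x^-1 ** h)) by (gs; reflexivity).
    apply IH.
Qed.

Lemma Z_inv (x : G) : Z x -> Z (x^-1).
Proof. intro H. rewrite <- (cj_by_one (x^-1)). apply Z_inv_aux; auto. Qed.

Lemma gen_sub (P : G -> Prop) : is_subgroup G (gen G P).
Proof. split; [apply gen_one|split]; intros; [apply gen_mul|apply gen_inv]; auto. Qed.

Lemma gen_min (P Q : G -> Prop) : is_subgroup G Q -> (forall x, P x -> Q x) ->
  forall x, gen G P x -> Q x.
Proof. intros [H1 [HM HI]] HPQ x Hx. induction Hx; auto. Qed.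

Lemma gen_mono (P Q : G -> Prop) : (forall x, P x -> Q x) ->
  forall x, gen G P x -> gen G Q x.
Proof. intros. apply (gen_min P); auto using gen_sub. intros; apply gen_base; auto. Qed.

Lemma sub_pw (H : G -> Prop) : is_subgroup G H -> forall x n, H x -> H (pw x n).
Proof. intros [H1 [HM HI]] x n Hx. induction n; simpl; auto. Qed.

Lemma pigeon (f : nat -> G) (l : list G) : (forall k, In (f k) l) ->
  exists i j, i < j /\ f i = f j.
Proof.
  intro Hf. apply NNPP. intro Hn.
  assert (Hinj : forall i j, f i = f j -> i = j).
  { intros i j E. destruct (Nat.lt_trichotomy i j) as [h|[h|h]]; auto;
    exfalso; apply Hn; [exists i, j| exists j, i]; auto. }
  assert (ND : NoDup (map f (seq 0 (S (length l))))).
  { apply NoDup_map_NoDup_ForallPairs. intros a b _ _; apply Hinj. apply seq_NoDup. }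
  assert (Hi : incl (map f (seq 0 (S (length l)))) l).
  { intros y Hy. apply in_map_iff in Hy. destruct Hy as [k [<- _]]. apply Hf. }
  pose proof (NoDup_incl_length ND Hi). rewrite length_map, length_seq in H. lia.
Qed.

Lemma finite_torsion (H : G -> Prop) : is_subgroup G H -> finite_set G H ->
  forall x, H x -> finite_order G x.
Proof.
  intros HS [l Hl] x Hx.
  destruct (pigeon (pw x) l) as [i [j [Hij E]]].
  { intro k. apply Hl. apply sub_pw; auto. }
  exists (j - i). split. lia.
  replace j with ((j - i) + i) in E by lia. rewrite pw_add in E.
  apply (mul_cancel_r _ (pw x i)). rewrite mul1. auto.
Qed.

Lemma torsion_inv (x : G) : finite_order G x -> finite_order G (x^-1).
Proof. intros [n [Hn E]]. exists n. split; auto. rewrite pw_inv, E, inv1. auto. Qed.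
Lemma torsion_cj (x h : G) : finite_order G x -> finite_order G (cj x h).
Proof. intros [n [Hn E]]. exists n. split; auto. rewrite <- cj_pw, E, cj_one. auto. Qed.


Lemma sub1 (H : G -> Prop) : is_subgroup G H -> H 1.
Proof. intros [a _]; auto. Qed.
Lemma subM (H : G -> Prop) : is_subgroup G H -> forall x y, H x -> H y -> H (x ** y).
Proof. intros [_ [a _]]; auto. Qed.
Lemma subI (H : G -> Prop) : is_subgroup G H -> forall x, H x -> H (x^-1).
Proof. intros [_ [_ a]]; auto. Qed.

Section Cong.
Variables W N : G -> Prop.
Hypothesis HW : is_subgroup G W.
Hypothesis HN : is_subgroup G N.
Hypothesis HNW : forall n, N n -> W n.
Hypothesis Hnorm : forall w n, W w -> N n -> N (cj n w).

Definition eqv (a b : G) := exists n, N n /\ a = b ** n.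

Lemma eqv_refl a : eqv a a.
Proof. exists 1. split. apply sub1; auto. gs; auto. Qed.
Lemma eqv_sym a b : eqv a b -> eqv b a.
Proof. intros [n [Hn ->]]. exists (n^-1). split. apply subI; auto. gs; auto. Qed.
Lemma eqv_trans a b c : eqv a b -> eqv b c -> eqv a c.
Proof. intros [n [Hn ->]] [m [Hm ->]]. exists (m ** n). split. apply subM; auto. gs; auto. Qed.
Lemma eqv_mull c a b : eqv a b -> eqv (c ** a) (c ** b).
Proof. intros [n [Hn ->]]. exists n. split; auto. gs; auto. Qed.
Lemma eqv_mulr c a b : W c -> eqv a b -> eqv (a ** c) (b ** c).
Proof. intros Hc [n [Hn ->]]. exists (cj n c). split; auto. gs; auto. Qed.
Lemma eqv_mul a a' b b' : W b -> eqv a a' -> eqv b b' -> eqv (a ** b) (a' ** b').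
Proof. intros Hb H1 H2. apply eqv_trans with (a' ** b). apply eqv_mulr; auto. apply eqv_mull; auto. Qed.
Lemma eqv_mul' a a' b b' : W b' -> eqv a a' -> eqv b b' -> eqv (a ** b) (a' ** b').
Proof. intros Hb H1 H2. apply eqv_trans with (a ** b'). apply eqv_mull; auto. apply eqv_mulr; auto. Qed.
Lemma eqv_Nr a n : N n -> eqv (a ** n) a.
Proof. intro Hn. exists n; auto. Qed.
Lemma eqv_Nl a n : W a -> N n -> eqv (n ** a) a.
Proof. intros Ha Hn. exists (cj n a). split; auto. gs; auto. Qed.
Lemma eqv_1N a : eqv 1 a -> N a.
Proof. intros [n [Hn E]].
  assert (a = n^-1) as -> by (rewrite <- (mulg1 _ a), <- (mulgV _ n), <- mulgA', <- E, mul1; reflexivity).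
  apply subI; auto. Qed.
Lemma eqv_N1 a : eqv a 1 -> N a.
Proof. intros [n [Hn E]]. rewrite E. gs. auto. Qed.
Lemma eqv_pw a b j : W b -> eqv a b -> eqv (pw a j) (pw b j).
Proof. intros Hb H. induction j; simpl. apply eqv_refl.
  apply eqv_mul'; auto. apply sub_pw; auto. Qed.
Lemma eqv_cj a b w : W w -> eqv a b -> eqv (cj a w) (cj b w).
Proof. intros Hw [n [Hn ->]]. exists (cj n w). split; auto. gs; auto. Qed.

Definition centr (u : G) := forall w, W w -> eqv (cj u w) u.

Lemma centr_pw u j : W u -> centr u -> centr (pw u j).
Proof. intros Hu Hc w Hw. rewrite cj_pw. apply eqv_pw. auto. apply Hc; auto. Qed.

Lemma centr_swap u w : W u -> W w -> centr u -> eqv (w ** u) (u ** w).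
Proof. intros Hu Hw Hc. apply eqv_sym.
  replace (u ** w) with (w ** cj u w) by (gs; reflexivity). apply eqv_mull. apply Hc; auto. Qed.

Variable E : nat.
Hypothesis HE : 0 < E.

Fixpoint prods (L : list G) : list G :=
  match L with
  | [] => [1]
  | u :: L' => flat_map (fun i => map (fun p => pw u i ** p) (prods L')) (seq 0 E)
  end.

Lemma in_prods_cons u L r : In r (prods (u :: L)) <->
  exists i p, i < E /\ In p (prods L) /\ r = pw u i ** p.
Proof.
  simpl. rewrite in_flat_map. split.
  - intros [i [Hi Hr]]. apply in_seq in Hi. apply in_map_iff in Hr. destruct Hr as [p [<- Hp]].
    exists i, p. repeat split; auto; lia.
  - intros [i [p [Hi [Hp ->]]]]. exists i. split. apply in_seq; lia. apply in_map_iff; eauto.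
Qed.

Lemma one_prods L : In 1 (prods L).
Proof. induction L; simpl. auto. apply in_prods_cons. exists 0, 1. repeat split; auto.
  simpl. gs. auto. Qed.

Definition goodL (L : list G) := forall u, In u L -> W u /\ centr u /\ N (pw u E).

Lemma prods_W L : goodL L -> forall r, In r (prods L) -> W r.
Proof. induction L; intros HL r Hr; simpl in Hr.
  - destruct Hr as [<-|[]]. apply sub1; auto.
  - apply in_prods_cons in Hr. destruct Hr as [i [p [_ [Hp ->]]]].
    apply subM; auto. apply sub_pw; auto. apply HL; simpl; auto.
    apply IHL; auto. intros v Hv; apply HL; simpl; auto.
Qed.

Lemma pw_modE u k : W u -> N (pw u E) -> eqv (pw u k) (pw u (k mod E)).
Proof.
  intros Hu HuE. pose proof (Nat.div_mod_eq k E) as Hk.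
  rewrite Hk at 1. rewrite pw_add, pw_comm, pw_mul. apply eqv_Nr. apply sub_pw; auto.
Qed.

Lemma prods_pow L : goodL L -> forall u k, In u L -> exists r, In r (prods L) /\ eqv (pw u k) r.
Proof.
  induction L as [|v L IH]; intros HL u k Hu. destruct Hu.
  destruct Hu as [->|Hu].
  - exists (pw u (k mod E) ** 1). split. apply in_prods_cons. exists (k mod E), 1.
    repeat split; auto. apply Nat.mod_upper_bound; lia. apply one_prods.
    rewrite mulg1. apply pw_modE; apply HL; simpl; auto.
  - destruct (IH (fun w Hw => HL w (or_intror Hw)) u k Hu) as [r [Hr Hk]].
    exists (pw v 0 ** r). split. apply in_prods_cons. exists 0, r. repeat split; auto.
    simpl. rewrite mul1. auto.
Qed.

Lemma prods_mul L : goodL L -> forall p q, In p (prods L) -> In q (prods L) ->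
  exists r, In r (prods L) /\ eqv (p ** q) r.
Proof.
  induction L as [|u L IH]; intros HL p q Hp Hq.
  - simpl in Hp, Hq. destruct Hp as [<-|[]]. destruct Hq as [<-|[]]. exists 1. split. simpl; auto.
    rewrite mul1. apply eqv_refl.
  - assert (HL' : goodL L) by (intros w Hw; apply HL; simpl; auto).
    destruct (HL u (or_introl eq_refl)) as [Hu [Hcu HuE]].
    apply in_prods_cons in Hp. destruct Hp as [i [p' [Hi [Hp' ->]]]].
    apply in_prods_cons in Hq. destruct Hq as [j [q' [Hj [Hq' ->]]]].
    destruct (IH HL' p' q' Hp' Hq') as [r' [Hr' Er]].
    exists (pw u ((i + j) mod E) ** r'). split.
    { apply in_prods_cons. exists ((i+j) mod E), r'. repeat split; auto. apply Nat.mod_upper_bound; lia. }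
    assert (Wp' : W p') by (apply (prods_W L); auto).
    assert (Wq' : W q') by (apply (prods_W L); auto).
    assert (Wr' : W r') by (apply (prods_W L); auto).
    apply eqv_trans with (pw u i ** ((pw u j ** p') ** q')).
    { rewrite !mulgA'. apply eqv_mull. rewrite <- !mulgA'. apply eqv_mulr; auto.
      apply centr_swap; auto. apply sub_pw; auto. apply centr_pw; auto. }
    rewrite <- !mulgA'. rewrite <- pw_add. rewrite (mulgA' _ (pw u (i + j))).
    apply eqv_trans with (pw u (i + j) ** r'). apply eqv_mull; auto.
    apply eqv_mulr; auto. apply pw_modE; auto.
Qed.

Lemma prods_cover L : goodL L -> forall z, gen G (fun z => N z \/ In z L) z ->
  (exists r, In r (prods L) /\ eqv z r) /\ (exists r, In r (prods L) /\ eqv (z^-1) r).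
Proof.
  intros HL z Hz. induction Hz as [z [Hz|Hz]| |a b _ [[ra [Ha1 Ha2]] [ra' [Ha1' Ha2']]] _ [[rb [Hb1 Hb2]] [rb' [Hb1' Hb2']]] |a _ [H1 H2]].
  - split.
    + exists 1. split. apply one_prods. exists z. split; auto. gs; auto.
    + exists 1. split. apply one_prods. exists (z^-1). split. apply subI; auto. gs; auto.
  - destruct (HL z Hz) as [Hu [Hcu HuE]]. split.
    + destruct (prods_pow L HL z 1 Hz) as [r [Hr Er]]. exists r. split; auto.
      simpl in Er. rewrite mulg1 in Er. auto.
    + destruct (prods_pow L HL z (E - 1) Hz) as [r [Hr Er]]. exists r. split; auto.
      apply eqv_trans with (pw z (E - 1)); auto.
      exists ((pw z E)^-1). split. apply subI; auto.
      replace E with (S (E - 1)) at 2 by lia. simpl. gs. reflexivity.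
  - split; exists 1; split; try apply one_prods; gs; apply eqv_refl.
  - assert (Wsub : forall x, gen G (fun z => N z \/ In z L) x -> W x).
    { apply gen_min; auto. intros x [Hx|Hx]; auto. apply HL; auto. }
    split.
    + destruct (prods_mul L HL ra rb Ha1 Hb1) as [r [Hr Er]]. exists r. split; auto.
      apply eqv_trans with (ra ** rb); auto. apply eqv_mul'; auto. apply (prods_W L); auto.
    + destruct (prods_mul L HL rb' ra' Hb1' Ha1') as [r [Hr Er]]. exists r. split; auto.
      rewrite invM. apply eqv_trans with (rb' ** ra'); auto. apply eqv_mul'; auto. apply (prods_W L); auto.
  - split. exact H2. rewrite invK; exact H1.
Qed.

End Cong.


Lemma bound_list (A : Type) (P : A -> nat -> Prop) (l : list A) :
  (forall a n m, P a n -> n <= m -> P a m) ->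
  (forall a, In a l -> exists n, P a n) -> exists N, forall a, In a l -> P a N.
Proof.
  intros Hm H. induction l as [|a l IH]. exists 0; intros a [].
  destruct (H a (or_introl eq_refl)) as [n Hn].
  destruct IH as [N HN]. intros b Hb; apply H; simpl; auto.
  exists (n + N). intros b [<-|Hb]. apply Hm with n; auto; lia. apply Hm with N; auto; lia.
Qed.

Lemma list_choice (A B : Type) (P : A -> B -> Prop) (l : list A) :
  (forall a, In a l -> exists b, P a b) ->
  exists lb, (forall a, In a l -> exists b, In b lb /\ P a b) /\
             (forall b, In b lb -> exists a, In a l /\ P a b).
Proof.
  intro H. induction l as [|a l IH]. exists []. split; intros ? [].
  destruct (H a (or_introl eq_refl)) as [b Hb].
  destruct IH as [lb [H1 H2]]. intros c Hc; apply H; simpl; auto.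
  exists (b :: lb). split.
  - intros c [<-|Hc]. exists b; simpl; auto. destruct (H1 c Hc) as [d [Hd Pd]]. exists d; simpl; auto.
  - intros d [<-|Hd]. exists a; simpl; auto. destruct (H2 d Hd) as [c [Hc Pc]]. exists c; simpl; auto.
Qed.

Lemma unif_exp (N : G -> Prop) (L : list G) : is_subgroup G N ->
  (forall u, In u L -> exists e, 0 < e /\ N (pw u e)) ->
  exists E, 0 < E /\ forall u, In u L -> N (pw u E).
Proof.
  intros HN H. induction L as [|a L IH]. exists 1%nat; split; auto; intros ? [].
  destruct (H a (or_introl eq_refl)) as [e [He Ne]].
  destruct IH as [E [HE NE]]. intros b Hb; apply H; simpl; auto.
  exists (e * E). split. lia. intros u [<-|Hu].
  rewrite pw_mul. apply sub_pw; auto.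
  rewrite Nat.mul_comm, pw_mul. apply sub_pw; auto.
Qed.

Definition lnc (x : G) (ys : list G) : G := fold_left (fun a y => cm a y) ys x.

Lemma lnc_one ys : lnc 1 ys = 1.
Proof. induction ys; simpl; auto. rewrite cm_one_l. auto. Qed.
Lemma lnc_app x ys y : lnc x (ys ++ [y]) = cm (lnc x ys) y.
Proof. unfold lnc. rewrite fold_left_app. reflexivity. Qed.

Lemma cm_sub (H : G -> Prop) : is_subgroup G H -> forall a b, H a -> H b -> H (cm a b).
Proof. intros HH a b Ha Hb. unfold comm. repeat apply subM; auto; apply subI; auto. Qed.

Lemma lnc_sub (H : G -> Prop) : is_subgroup G H -> forall ys x, H x -> (forall y, In y ys -> H y) -> H (lnc x ys).
Proof. intros HH ys. induction ys; intros x Hx Hy; simpl; auto.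
  apply IHys. apply cm_sub; auto. apply Hy; simpl; auto. intros; apply Hy; simpl; auto. Qed.

Lemma cm_mul_r (v b c : G) : cm v (b ** c) = cm v c ** cj (cm v b) c.
Proof. gs. reflexivity. Qed.

Fixpoint tuples (S : list G) (k : nat) : list (list G) :=
  match k with
  | 0 => [[]]
  | Datatypes.S k => flat_map (fun y => map (cons y) (tuples S k)) S
  end.

Lemma tuples_complete S k ys : length ys = k -> (forall y, In y ys -> In y S) -> In ys (tuples S k).
Proof. revert k. induction ys as [|a ys IH]; intros k Hk Hy; simpl in Hk; subst; simpl; auto.
  apply in_flat_map. exists a. split. apply Hy; simpl; auto. apply in_map. apply IH; auto.
  intros; apply Hy; simpl; auto. Qed.

Lemma tuples_sound S k ys : In ys (tuples S k) -> length ys = k /\ (forall y, In y ys -> In y S).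
Proof. revert ys. induction k; intros ys H; simpl in H.
  destruct H as [<-|[]]. split; simpl; auto. intros ? [].
  apply in_flat_map in H. destruct H as [a [Ha H]]. apply in_map_iff in H. destruct H as [t [<- Ht]].
  destruct (IHk t Ht) as [H1 H2]. split. simpl; auto. intros y [<-|Hy]; auto. Qed.

Section FinF.
Variable s : list G.
Hypothesis Hs : forall a, In a s -> Z a /\ finite_order G a.
Local Notation W := (fg_subgroup G s).
Local Notation S := (s ++ map (@inv G) s).

Lemma W_sub : is_subgroup G W.
Proof. apply gen_sub. Qed.

Lemma S_prop y : In y S -> Z y /\ finite_order G y /\ W y.
Proof. intro H. apply in_app_iff in H. destruct H as [H|H].
  - destruct (Hs y H). repeat split; auto. apply gen_base; auto.
  - apply in_map_iff in H. destruct H as [a [<- Ha]]. destruct (Hs a Ha).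
    repeat split. apply Z_inv; auto. apply torsion_inv; auto. apply gen_inv, gen_base; auto.
Qed.

Lemma depth x : Z x -> exists n, forall ys, (forall y, In y ys -> In y S) -> n <= length ys -> lnc x ys = 1.
Proof.
  intro H. induction H as [|x Hx IH].
  - exists 0. intros. apply lnc_one.
  - destruct (bound_list G (fun y n => forall ys, (forall y, In y ys -> In y S) -> n <= length ys -> lnc (cm x y) ys = 1) S)
      as [N HN].
    + intros a n m Hn Hnm ys H1 H2. apply Hn; auto. lia.
    + intros a _. apply IH.
    + exists (Datatypes.S N). intros ys Hys Hl. destruct ys as [|y ys]. simpl in Hl; lia.
      simpl. apply HN. apply Hys; simpl; auto. intros; apply Hys; simpl; auto. simpl in Hl; lia.
Qed.

Definition Comm k u := exists x ys, In x S /\ (forall y, In y ys -> In y S) /\ length ys = k /\ u = lnc x ys.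

Definition CL k := flat_map (fun x => map (lnc x) (tuples S k)) S.

Lemma CL_complete k u : Comm k u -> In u (CL k).
Proof. intros [x [ys [Hx [Hy [Hl ->]]]]]. apply in_flat_map. exists x. split; auto.
  apply in_map. apply tuples_complete; auto. Qed.

Lemma CL_sound k u : In u (CL k) -> Comm k u.
Proof. intro H. apply in_flat_map in H. destruct H as [x [Hx H]]. apply in_map_iff in H.
  destruct H as [ys [<- Hys]]. destruct (tuples_sound _ _ _ Hys). exists x, ys; auto. Qed.

Lemma Comm_W k u : Comm k u -> W u.
Proof. intros [x [ys [Hx [Hy [Hl ->]]]]]. apply lnc_sub. apply W_sub. apply S_prop; auto.
  intros; apply S_prop; auto. Qed.

Definition Qk (k : nat) := forall N : G -> Prop, is_subgroup G N -> (forall n, N n -> W n) ->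
  (forall w n, W w -> N n -> N (cj n w)) -> finite_set G N -> (forall u, Comm k u -> N u) ->
  finite_set G W.

Lemma Q0 : Qk 0.
Proof.
  intros N HN HNW Hn [l Hl] HC. exists l. intros x Hx. apply Hl.
  revert x Hx. apply gen_min; auto. intros x Hx. apply HC. exists x, []. repeat split; auto.
  apply in_app_iff; auto. intros ? [].
Qed.

Lemma central_from_gens (N : G -> Prop) : is_subgroup G N -> (forall n, N n -> W n) ->
  (forall w n, W w -> N n -> N (cj n w)) ->
  forall u, W u -> (forall y, In y s -> N (cm u y)) -> centr W N u.
Proof.
  intros HN HNW Hn u Hu Hy w Hw. induction Hw as [y Hy'| |a b Ha IHa Hb IHb|a Ha IHa].
  - rewrite cj_eq. apply eqv_Nr. auto.
  - rewrite cj_by_one. apply eqv_refl; auto.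
  - rewrite <- cj_cj. apply eqv_trans with (cj u b); auto. apply eqv_cj with W; auto.
  - apply eqv_sym; auto. replace u with (cj (cj u a) (a^-1)) at 1 by (rewrite cj_cj; gs; reflexivity).
    apply eqv_cj with W; auto. apply gen_inv; auto.
Qed.

Lemma Qstep k : Qk k -> Qk (Datatypes.S k).
Proof.
  intros IH N HN HNW Hn [lN HlN] HC.
  set (L := CL k).
  assert (HLW : forall u, In u L -> W u) by (intros u Hu; apply (Comm_W k); apply CL_sound; auto).
  assert (Hcen : forall u, In u L -> centr W N u).
  { intros u Hu. destruct (CL_sound _ _ Hu) as [x [ys [Hx [Hy [Hl Eu]]]]].
    apply central_from_gens; auto. intros y Hy'. apply HC. exists x, (ys ++ [y]). repeat split; auto.
    intros z Hz. apply in_app_iff in Hz. destruct Hz as [Hz|[<-|[]]]; auto. apply in_app_iff; auto.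
    rewrite length_app; simpl; lia. rewrite lnc_app, Eu. reflexivity. }
  assert (Htor : forall u, In u L -> exists e, 0 < e /\ N (pw u e)).
  { intros u Hu. destruct (CL_sound _ _ Hu) as [x [ys [Hx [Hy [Hl Eu]]]]].
    destruct ys as [|y0 ys0] using rev_ind.
    - simpl in Eu. subst u. destruct (S_prop x Hx) as [_ [[e [He Ee]] _]]. exists e. split; auto.
      rewrite Ee. apply sub1; auto.
    - clear IHys0. rewrite lnc_app in Eu. set (v := lnc x ys0) in Eu.
      assert (Hy0 : In y0 S) by (apply Hy; apply in_app_iff; simpl; auto).
      destruct (S_prop y0 Hy0) as [_ [[e [He Ee]] Wy0]].
      assert (Wu : W u) by (apply HLW; auto).
      assert (Hj : forall j, eqv N (cm v (pw y0 j)) (pw u j)).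
      { induction j. simpl. gs. apply eqv_refl; auto.
        simpl pw. rewrite cm_mul_r, <- Eu. change (u ** pw u j) with (pw u (Datatypes.S j)). rewrite pw_S_r. apply eqv_mul' with W; auto.
        apply Hcen; auto. apply sub_pw; auto. apply W_sub. }
      exists e. split; auto. specialize (Hj e). rewrite Ee in Hj. unfold comm in Hj.
      autorewrite with gsimp in Hj. apply eqv_1N; auto. }
  destruct (unif_exp N L HN Htor) as [E [HE HNE]].
  assert (Hgood : goodL W N E L) by (intros u Hu; repeat split; auto).
  set (N' := gen G (fun z => N z \/ In z L)).
  assert (HN'W : forall z, N' z -> W z).
  { apply gen_min. apply W_sub. intros z [Hz|Hz]; auto. }
  apply (IH N').
  - apply gen_sub.
  - auto.
  - intros w z Hw Hz. induction Hz as [z [Hz|Hz]| |a b Ha IHa Hb IHb|a Ha IHa].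
    + apply gen_base; left; auto.
    + destruct (Hcen z Hz w Hw) as [n [Hnn En]]. rewrite En. apply gen_mul; apply gen_base; auto.
    + rewrite cj_one; apply gen_one.
    + rewrite cj_mul. apply gen_mul; auto.
    + rewrite cj_inv. apply gen_inv; auto.
  - exists (flat_map (fun r => map (fun n => r ** n) lN) (prods E L)).
    intros z Hz. destruct (prods_cover W N (gen_sub _) HN HNW Hn E HE L Hgood z Hz) as [[r [Hr [n [Hnn ->]]]] _].
    apply in_flat_map. exists r. split; auto. apply in_map. auto.
  - intros u Hu. apply gen_base. right. apply CL_complete; auto.
Qed.

Theorem fin_F : finite_set G W.
Proof.
  destruct (bound_list G (fun x n => forall ys, (forall y, In y ys -> In y S) -> n <= length ys -> lnc x ys = 1) S)
    as [K HK].
  - intros a n m Hn Hnm ys H1 H2. apply Hn; auto. lia.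
  - intros a Ha. apply depth. apply S_prop; auto.
  - assert (HQ : forall k, Qk k) by (induction k; [apply Q0| apply Qstep; auto]).
    apply (HQ K (fun z => z = 1)).
    + split; auto. split; intros; subst; gs; auto.
    + intros n ->. apply sub1. apply W_sub.
    + intros w n _ ->. apply cj_one.
    + exists [1]. intros x ->; simpl; auto.
    + intros u [x [ys [Hx [Hy [Hl ->]]]]]. apply HK; auto. lia.
Qed.

End FinF.


Lemma torsion_F (s : list G) : (forall a, In a s -> Z a /\ finite_order G a) ->
  forall w, fg_subgroup G s w -> finite_order G w.
Proof. intros Hs. apply finite_torsion. apply gen_sub. apply fin_F; auto. Qed.

Fixpoint zc (x g : G) (i : nat) : G :=
  match i with 0 => x | Datatypes.S i => cm (zc x g i) g end.

Lemma zc_shift x g i : zc x g (Datatypes.S i) = zc (cm x g) g i.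
Proof. induction i; simpl; auto. simpl in IHi. rewrite IHi. reflexivity. Qed.

Lemma engel x : Z x -> forall g, exists n, zc x g n = 1.
Proof.
  intro H. induction H as [|x Hx IH]; intro g.
  - exists 0. reflexivity.
  - destruct (IH g g) as [n Hn]. exists (Datatypes.S n). rewrite zc_shift. auto.
Qed.

Lemma zc_prop x g i : Z x -> finite_order G x -> Z (zc x g i) /\ finite_order G (zc x g i).
Proof.
  intros HZ HT. induction i; simpl; auto. destruct IHi as [Z1 T1]. split.
  apply Z_comm; auto.
  apply (torsion_F [zc x g i; cj (zc x g i) g]).
  - intros a [<-|[<-|[]]]; split; auto. apply Z_cj; auto. apply torsion_cj; auto.
  - replace (cm (zc x g i) g) with ((zc x g i)^-1 ** cj (zc x g i) g) by (gs; reflexivity).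
    apply gen_mul. apply gen_inv, gen_base; simpl; auto. apply gen_base; simpl; auto.
Qed.

Lemma commute_sym (a b : G) : commute G a b -> commute G b a.
Proof. unfold commute; auto. Qed.

Lemma cent_power x : Z x -> finite_order G x -> forall g, exists m, 0 < m /\ commute G (pw g m) x.
Proof.
  intros HZ HT g. destruct (engel x HZ g) as [n Hn].
  destruct n as [|n'].
  { simpl in Hn. subst x. exists 1%nat. split; auto. unfold commute. gs. reflexivity. }
  set (n := Datatypes.S n') in *.
  set (V := fg_subgroup G (map (zc x g) (seq 0 n))).
  assert (Vfin : finite_set G V).
  { apply fin_F. intros a Ha. apply in_map_iff in Ha. destruct Ha as [i [<- _]]. apply zc_prop; auto. }
  assert (Vcj : forall w, V w -> V (cj w g)).
  { intros w Hw. induction Hw as [w Hw| |a b _ IHa _ IHb|a _ IHa].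
    - apply in_map_iff in Hw. destruct Hw as [i [<- Hi]]. apply in_seq in Hi.
      rewrite cj_eq. apply gen_mul. apply gen_base. apply in_map. apply in_seq; lia.
      change (cm (zc x g i) g) with (zc x g (Datatypes.S i)).
      destruct (Nat.eq_dec (Datatypes.S i) n) as [E|E].
      + rewrite E, Hn. apply gen_one.
      + apply gen_base. apply in_map. apply in_seq; lia.
    - rewrite cj_one. apply gen_one.
    - rewrite cj_mul. apply gen_mul; auto.
    - rewrite cj_inv. apply gen_inv; auto. }
  assert (Hk : forall k, V (cj x (pw g k))).
  { induction k. simpl. rewrite cj_by_one. apply gen_base. apply in_map_iff. exists 0. split; auto.
    apply in_seq. lia.
    rewrite pw_S_r, <- cj_cj. apply Vcj; auto. }
  destruct Vfin as [l Hl].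
  destruct (pigeon (fun k => cj x (pw g k)) l) as [i [j [Hij E]]].
  { intro k. apply Hl. apply Hk. }
  exists (j - i). split. lia. apply commute_sym. apply cj_fix_commute.
  replace j with ((j - i) + i) in E by lia. rewrite pw_add, <- cj_cj in E.
  apply cj_inj in E. auto.
Qed.

Lemma commute_inv (u a : G) : commute G u a -> commute G u (a^-1).
Proof. unfold commute. intro H.
  assert (E : u ** a^-1 = a^-1 ** ((a ** u) ** a^-1)) by (gs; reflexivity).
  rewrite E, <- H. gs. reflexivity. Qed.

Section Periodic.
Hypothesis Hcent : forall H : G -> Prop, is_subgroup G H -> ~ abelian G H -> centralizer_le G H.
Variables x y : G.
Hypothesis Hx : Z x /\ finite_order G x.
Hypothesis Hy : Z y /\ finite_order G y.
Hypothesis Hxy : ~ commute G x y.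

Theorem periodic g : finite_order G g.
Proof.
  destruct (cent_power x (proj1 Hx) (proj2 Hx) g) as [m1 [Hm1 C1]].
  destruct (cent_power y (proj1 Hy) (proj2 Hy) g) as [m2 [Hm2 C2]].
  set (u := pw g (m1 * m2)).
  set (H := fg_subgroup G [x; y]).
  assert (Hs : forall a, In a [x; y] -> Z a /\ finite_order G a) by (intros a [<-|[<-|[]]]; auto).
  assert (Cu : forall h, H h -> commute G u h).
  { intros h Hh. induction Hh as [h [<-|[<-|[]]]| |a b _ IHa _ IHb|a _ IHa].
    - unfold u. rewrite pw_mul. apply commute_pw. auto.
    - unfold u. rewrite Nat.mul_comm, pw_mul. apply commute_pw. auto.
    - unfold commute. gs. reflexivity.
    - unfold commute in *. rewrite <- mulgA', IHa, mulgA', IHb, mulgA'. reflexivity.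
    - apply commute_inv; auto. }
  assert (Hu : H u).
  { apply (Hcent H). apply gen_sub.
    intro Hab. apply Hxy. apply Hab; apply gen_base; simpl; auto.
    exact Cu. }
  destruct (torsion_F [x; y] Hs u Hu) as [k [Hk Ek]].
  exists (m1 * m2 * k). split. apply Nat.mul_pos_pos; auto. apply Nat.mul_pos_pos; auto.
  rewrite pw_mul. auto.
Qed.
End Periodic.

Section LocFin.
Hypothesis Hper : forall g : G, finite_order G g.

Lemma derived_shift (L M : G -> Prop) : (forall z, M z -> derived G L 1%nat z) ->
  forall k z, derived G M k z -> derived G L (Datatypes.S k) z.
Proof.
  intros HM k. induction k; intros z Hz. apply HM; auto.
  change (gen G (fun z => exists a b, derived G M k a /\ derived G M k b /\ z = cm a b) z) in Hz.
  change (gen G (fun z => exists a b, derived G L (Datatypes.S k) a /\ derived G L (Datatypes.S k) b /\ z = cm a b) z).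
  revert z Hz. apply gen_mono. intros z [a [b [Ha [Hb ->]]]].
  exists a, b. repeat split; auto.
Qed.

Theorem sol_fin d : forall s, (forall z, derived G (fg_subgroup G s) d z -> z = 1) ->
  finite_set G (fg_subgroup G s).
Proof.
  induction d as [|d IH]; intros s Hd.
  { exists [1]. intros z Hz. left. symmetry. apply Hd. auto. }
  set (L := fg_subgroup G s).
  set (N := derived G L 1%nat).
  assert (HL : is_subgroup G L) by apply gen_sub.
  assert (HN : is_subgroup G N) by apply gen_sub.
  assert (HNL : forall n, N n -> L n).
  { apply gen_min; auto. intros z [a [b [Ha [Hb ->]]]]. apply cm_sub; auto. }
  assert (Hnorm : forall w n, L w -> N n -> N (cj n w)).
  { intros w n Hw Hn. induction Hn as [z [a [b [Ha [Hb ->]]]]| |a b _ IHa _ IHb|a _ IHa].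
    - replace (cj (cm a b) w) with (cm (cj a w) (cj b w)) by (gs; reflexivity).
      apply gen_base. exists (cj a w), (cj b w). repeat split; auto.
      unfold cj. apply subM; auto. apply subI; auto. apply subM; auto.
      unfold cj. apply subM; auto. apply subI; auto. apply subM; auto.
    - rewrite cj_one. apply gen_one.
    - rewrite cj_mul. apply gen_mul; auto.
    - rewrite cj_inv. apply gen_inv; auto. }
  destruct (unif_exp N s HN) as [E [HE HNE]].
  { intros u _. destruct (Hper u) as [e [He Ee]]. exists e. split; auto. rewrite Ee. apply sub1; auto. }
  assert (Hgood : goodL L N E s).
  { intros u Hu. repeat split; auto. apply gen_base; auto.
    intros w Hw. exists (cm u w). split. apply gen_base. exists u, w. repeat split; auto.
    apply gen_base; auto. apply cj_eq. }
  set (T := prods E s).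
  assert (HTL : forall r, In r T -> L r) by (apply prods_W with N; auto).
  assert (Hcov : forall l, L l -> exists r, In r T /\ eqv N l r).
  { intros l Hl. apply (prods_cover L N HL HN HNL Hnorm E HE s Hgood). revert l Hl.
    apply gen_mono. auto. }
  set (S := s ++ map (@inv G) s).
  assert (HSL : forall y, In y S -> L y).
  { intros y Hy. apply in_app_iff in Hy. destruct Hy as [Hy|Hy]. apply gen_base; auto.
    apply in_map_iff in Hy. destruct Hy as [a [<- Ha]]. apply gen_inv, gen_base; auto. }
  destruct (list_choice (G * G) G
     (fun p w => (exists r, In r T /\ fst p ** snd p = w ** r) /\ N w) (list_prod T S))
    as [S' [HS1 HS2]].
  { intros [t y] Hp. apply in_prod_iff in Hp. destruct Hp as [Ht Hy].
    destruct (Hcov (t ** y)) as [r [Hr [n [Hn En]]]]. apply subM; auto.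
    exists (cj n (r^-1)). split. exists r. split; auto. simpl. rewrite En. gs. reflexivity.
    apply Hnorm; auto. apply subI; auto. }
  set (M := fg_subgroup G S').
  assert (HMN : forall z, M z -> N z).
  { apply gen_min; auto. intros z Hz. destruct (HS2 z Hz) as [? [? [? Hz']]]. auto. }
  destruct (IH S') as [lM HlM].
  { intros z Hz. apply Hd. apply (derived_shift L M); auto. }
  assert (Hsch : forall l, L l ->
     (forall t, In t T -> exists w r, M w /\ In r T /\ t ** l = w ** r) /\
     (forall t, In t T -> exists w r, M w /\ In r T /\ t ** l^-1 = w ** r)).
  { assert (Hbase : forall y, In y S -> forall t, In t T -> exists w r, M w /\ In r T /\ t ** y = w ** r).
    { intros y Hy t Ht. destruct (HS1 (t, y)) as [w [Hw [[r [Hr Er]] _]]].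
      apply in_prod; auto. exists w, r. repeat split; auto. apply gen_base; auto. }
    intros l Hl. induction Hl as [y Hy| |a b _ [IHa IHa'] _ [IHb IHb']|a _ [IHa IHa']].
    - split; apply Hbase; auto; apply in_app_iff; auto. right. apply in_map; auto.
    - split; intros t Ht; exists 1, t; repeat split; auto; try apply gen_one; gs; reflexivity.
    - split; intros t Ht.
      + destruct (IHa t Ht) as [w1 [r1 [Hw1 [Hr1 E1]]]].
        destruct (IHb r1 Hr1) as [w2 [r2 [Hw2 [Hr2 E2]]]].
        exists (w1 ** w2), r2. repeat split; auto. apply gen_mul; auto.
        rewrite <- mulgA', E1, mulgA', E2. gs. reflexivity.
      + destruct (IHb' t Ht) as [w1 [r1 [Hw1 [Hr1 E1]]]].
        destruct (IHa' r1 Hr1) as [w2 [r2 [Hw2 [Hr2 E2]]]].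
        exists (w1 ** w2), r2. repeat split; auto. apply gen_mul; auto.
        rewrite invM, <- mulgA', E1, mulgA', E2. gs. reflexivity.
    - split. exact IHa'. rewrite invK. exact IHa. }
  exists (flat_map (fun w => map (fun r => w ** r) T) lM).
  intros l Hl. destruct (proj1 (Hsch l Hl) 1 (one_prods E HE s)) as [w [r [Hw [Hr Er]]]].
  apply in_flat_map. exists w. split. apply HlM; auto. apply in_map_iff. exists r. split; auto.
  rewrite <- Er. gs. reflexivity.
Qed.

End LocFin.

End Main.

Theorem corollary5p5 (G : group) :
  locally_soluble G ->
  (forall H : G -> Prop, is_subgroup G H -> ~ abelian G H -> centralizer_le G H) ->
  (exists x y : G, hypercenter G x /\ hypercenter G y /\
     finite_order G x /\ finite_order G y /\ ~ commute G x y) ->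
  locally_finite G.
Proof.
  intros Hsol Hcent [x [y [Zx [Zy [Tx [Ty Hxy]]]]]] s.
  destruct (Hsol s) as [d Hd].
  apply (sol_fin G (periodic G Hcent x y (conj Zx Tx) (conj Zy Ty) Hxy) d s Hd).
Qed.
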